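(* Let $L$ be an integer, $a,b$ divisors of $L$, $M=L/b$, and let $\mathbf g\in\mathbb C^L$ (indexed $L$-periodically) be a window such that $$K_{\mathbf g}:=\frac1b\min_{t\in\{0,\dots,M-1\}}\left(\sum_{k=0}^{b-1}|g[t+kM]|^2\right)>0.$$ Let $\mathcal S_{\mathbf X}[k]\ge 0$ be a power spectrum, $\sigma_0^2>0$, $\delta\in\mathbb R$, and let $C_{\mathbf G}$ be the $M\times M$ matrix $$C_{\mathbf G}[m,m']=C_{\mathcal G_{\mathbf Z}}[m-\delta,m'-\delta]+C_{\mathcal G_{\mathbf N}}[m,m'],$$ where $C_{\mathcal G_{\mathbf Z}}[\mu,\mu']=\sum_{k\in I^+}\mathcal S_{\mathbf X}[k]\,\overline{\hat g}(k-\mu b)\,\hat g(k-\mu'b)$ and $C_{\mathcal G_{\mathbf N}}[m,m']=\sigma_0^2\sum_{k=0}^{L-1}\overline{\hat g}[k]\hat g[k-(m'-m)b]$ (i.e. the covariance matrix of a fixed-time slice of the Gabor transform of a frequency-shifted wide-sense stationary analytic signal plus circular complex white Gaussian noise of variance $\sigma_0^2$). Then for all $\mathbf x\in\mathbb C^M$, $$\langle C_{\mathbf G}\mathbf x,\mathbf x\rangle\ge \sigma_0^2K_{\mathbf g}\|\mathbf x\|^2,$$ and $C_{\mathbf G}$ is therefore boundedly invertible.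
   Context: $\hat g(\xi)=\sum_{t=0}^{L-1}g[t]e^{-2i\pi\xi t/L}$ is the DFT of $\mathbf g$, evaluated at a possibly non-integer frequency $\xi$; $I^+=\{k:0\le k<L/2\}$ is the set of positive frequency indices. $\langle\cdot,\cdot\rangle$ is the standard Hermitian inner product on $\mathbb C^M$. *)

(* Defs.v *)
From HB Require Import structures.
From mathcomp Require Import all_boot all_order all_algebra.
From mathcomp Require Import reals trigo.
From mathcomp Require Import complex.
Set Implicit Arguments. Unset Strict Implicit. Unset Printing Implicit Defensive.
Import Order.TTheory GRing.Theory Num.Theory.
Local Open Scope ring_scope.
Local Open Scope complex_scope.

Section GaborDefs.
Variable R : realType.
Local Notation C := R[i].

Definition expi (theta : R) : C := (cos theta) +i* (sin theta).

Definition ghat (L : nat) (g : nat -> C) (xi : R) : C :=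
  \sum_(t < L) g t * expi (- (2 * pi * xi * t%:R / L%:R)).

Definition Kg (L b : nat) (g : nat -> C) : R :=
  let M := (L %/ b)%N in
  let F := fun t : nat => \sum_(k < b) ComplexField.Normc.normc (g (t + k * M)%N) ^+ 2 in
  (b%:R)^-1 * \big[Num.min/F 0%N]_(t < M) F t.

(* C_{G_Z}[mu, mu'] = sum_{k in I^+} S[k] conj(ghat(k - mu b)) ghat(k - mu' b),
   I^+ = {k : 0 <= k < L/2} *)
Definition CZ (L b : nat) (S : nat -> R) (g : nat -> C) (mu mu' : R) : C :=
  \sum_(k < L | (2 * k < L)%N)
     (S k)%:C * (ghat L g (k%:R - mu * b%:R))^* * ghat L g (k%:R - mu' * b%:R).

Definition CN (L b : nat) (sigma0 : R) (g : nat -> C) (m m' : nat) : C :=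
  (sigma0 ^+ 2)%:C *
  \sum_(k < L) (ghat L g k%:R)^* * ghat L g (k%:R - (m'%:R - m%:R) * b%:R).

Definition CG (L b : nat) (S : nat -> R) (sigma0 delta : R) (g : nat -> C)
  : 'M[C]_(L %/ b) :=
  \matrix_(m < L %/ b, m' < L %/ b)
    (CZ L b S g (m%:R - delta) (m'%:R - delta) + CN L b sigma0 g m m').

End GaborDefs.

(* Main.v *)
Require Import Defs.
From HB Require Import structures.
From mathcomp Require Import all_boot all_order all_algebra.
From mathcomp Require Import reals trigo.
From mathcomp Require Import complex.
From mathcomp Require Import ring lra.
Import Order.TTheory GRing.Theory Num.Theory.
Local Open Scope ring_scope.
Local Open Scope complex_scope.

Section Aux.
Variable R : realType.
Local Notation C := R[i].

Lemma expiD (a b : R) : expi (a + b) = expi a * expi b.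
Proof. rewrite /expi cosD sinD /=. congr Complex; ring. Qed.

Lemma expi0 : expi (0 : R) = 1.
Proof. by rewrite /expi cos0 sin0. Qed.

Lemma expiJ (a : R) : (expi a)^* = expi (- a).
Proof. by rewrite /expi cosN sinN. Qed.

Lemma expiX (a : R) n : expi a ^+ n = expi (n%:R * a).
Proof.
elim: n => [|n IH]; first by rewrite expr0 mul0r expi0.
by rewrite exprS IH -expiD mulrSr mulrDl mul1r addrC.
Qed.

Lemma expi2pin n : expi (2 * pi * n%:R) = 1 :> C.
Proof.
elim: n => [|n IH]; first by rewrite mulr0 expi0.
have -> : 2 * pi * n.+1%:R = 2 * pi * n%:R + pi *+ 2 :> R.
  by rewrite -natr1 mulr2n; ring.
by rewrite expiD IH mul1r /expi cos2pi sin2pi.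
Qed.


Lemma expi_neq1 (th : R) : 0 < th < pi *+ 2 -> expi th != 1.
Proof.
move=> /andP[t0 t2]; apply/eqP => E.
have hs : 0 < sin (th / 2) by apply: sin_gt0_pi; apply/andP; split; lra.
have E2 : expi (th / 2) * expi (th / 2) = 1.
  by rewrite -expiD -E; congr expi; field.
move: E2; rewrite /expi /= => -[E1 _].
have := cos2Dsin2 (th / 2); nra.
Qed.

Lemma expiNJ (a : R) : expi (- a) = (expi a)^*.
Proof. by rewrite expiJ. Qed.

Lemma orth (n : nat) (s t : 'I_n) :
  \sum_(k < n) expi (2 * pi * k%:R * (s%:R - t%:R) / n%:R) = (s == t)%:R * n%:R :> C.
Proof.
have n0 : (0 < n)%N by case: n s t => [[]|].
have n0R : (n%:R : R) != 0 by rewrite pnatr_eq0 -lt0n.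
case: eqVneq => [->|st].
  under eq_bigr do rewrite subrr mulr0 mul0r expi0.
  by rewrite sumr_const card_ord mul1r.
rewrite mul0r.
pose w : C := expi (2 * pi * (s%:R - t%:R) / n%:R).
have -> : \sum_(k < n) expi (2 * pi * k%:R * (s%:R - t%:R) / n%:R) = \sum_(k < n) w ^+ k.
  by apply: eq_bigr => k _; rewrite /w expiX; congr expi; field.
have wn : w ^+ n = 1.
  rewrite /w expiX.
  have -> : n%:R * (2 * pi * (s%:R - t%:R) / n%:R) = 2 * pi * s%:R + - (2 * pi * t%:R) :> R.
    by field.
  by rewrite expiD expiNJ !expi2pin conjc1 mulr1.
have w1 : w != 1.
  have [lts|lts] := ltnP t s.
    apply: expi_neq1; apply/andP; split.
      apply: divr_gt0; last by rewrite ltr0n.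
      apply: mulr_gt0; first by have := @pi_gt0 R; lra.
      by rewrite subr_gt0 ltr_nat.
    rewrite ltr_pdivrMr ?ltr0n //.
    have : (s%:R - t%:R : R) < n%:R.
      have : (s%:R : R) < n%:R by rewrite ltr_nat.
      have : (0 : R) <= t%:R by rewrite ler0n.
      lra.
    have := @pi_gt0 R; nra.
  have lts' : (s < t)%N by rewrite ltn_neqAle lts andbT; apply: contra st => /eqP /val_inj ->.
  apply/negP => /eqP E.
  have : (w^* == 1) by rewrite E conjc1.
  rewrite /w expiJ.
  have -> : - (2 * pi * (s%:R - t%:R) / n%:R) = 2 * pi * (t%:R - s%:R) / n%:R :> R.
    by field.
  apply/negP; apply: expi_neq1; apply/andP; split.
    apply: divr_gt0; last by rewrite ltr0n.
    apply: mulr_gt0; first by have := @pi_gt0 R; lra.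
    by rewrite subr_gt0 ltr_nat.
  rewrite ltr_pdivrMr ?ltr0n //.
  have : (t%:R - s%:R : R) < n%:R.
    have : (t%:R : R) < n%:R by rewrite ltr_nat.
    have : (0 : R) <= s%:R by rewrite ler0n.
    lra.
  have := @pi_gt0 R; nra.
have : (w - 1) * \sum_(k < n) w ^+ k = 0 by rewrite -subrX1 wn subrr.
by move/eqP; rewrite mulf_eq0 subr_eq0 (negbTE w1) /= => /eqP.

Qed.


Lemma numconjE (x : C) : Num.conj x = x^*.
Proof. reflexivity. Qed.

Lemma expi_swap (A B Cc D : R) (u v : C) : A + B = Cc + D ->
  u * expi A * (v * expi B) = u * v * expi Cc * expi D.
Proof.
move=> h; have h2 : expi A * expi B = expi Cc * expi D by rewrite -!expiD h.
transitivity (u * v * (expi A * expi B)); first by ring.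
by rewrite h2; ring.
Qed.

Lemma CN_eq L b s0 (g : nat -> C) (m m' : nat) : (0 < L)%N ->
  CN L b s0 g m m' = (s0 ^+ 2)%:C * (L%:R * \sum_(t < L) (g t)^* * g t *
      expi (2 * pi * ((m'%:R - m%:R) * b%:R) * t%:R / L%:R)).
Proof.
move=> L0; have L0R : (L%:R : R) != 0 by rewrite pnatr_eq0 -lt0n.
rewrite /CN; congr (_ * _); rewrite /ghat.
set d : R := (m'%:R - m%:R) * b%:R.
transitivity (\sum_(k < L) \sum_(s < L) \sum_(t < L) ((g s)^* * g t *
   expi (2 * pi * d * t%:R / L%:R)) * expi (2 * pi * k%:R * (s%:R - t%:R) / L%:R)).
  apply: eq_bigr => k _; rewrite rmorph_sum mulr_suml; apply: eq_bigr => s _.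
  rewrite mulr_sumr; apply: eq_bigr => t _.
  rewrite rmorphM /= !numconjE expiJ opprK; apply: expi_swap; rewrite /d; by field.
rewrite exchange_big /=.
transitivity (\sum_(s < L) \sum_(t < L) ((g s)^* * g t *
   expi (2 * pi * d * t%:R / L%:R)) * ((s == t)%:R * L%:R)).
  apply: eq_bigr => s _; rewrite exchange_big /=; apply: eq_bigr => t _.
  by rewrite -mulr_sumr orth.
rewrite mulr_sumr; apply: eq_bigr => s _.
rewrite (bigD1 s) //= big1 ?addr0 => [|t /negbTE]; first by rewrite eqxx mul1r mulrC.
by rewrite eq_sym => ->; rewrite mul0r mulr0.
Qed.


Lemma sum_split (f : nat -> C) b M :
  \sum_(t < b * M) f t = \sum_(r < M) \sum_(k < b) f (r + k * M)%N.
Proof.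
elim: b => [|b IH].
  by rewrite mul0n big_ord0 big1 // => r _; rewrite big_ord0.
rewrite mulSnr big_split_ord /= IH.
rewrite [RHS](eq_bigr (fun r : 'I_M => \sum_(k < b) f (r + k * M)%N + f (r + b * M)%N)); last first.
  by move=> r _; rewrite big_ord_recr.
rewrite big_split /=; congr (_ + _); apply: eq_bigr => r _; by rewrite addnC.
Qed.

Lemma Zpart L b (S : nat -> R) (g : nat -> C) delta n (x : 'cV[C]_n) :
  (forall k, 0 <= S k) ->
  0 <= \sum_(i < n) \sum_(j < n) CZ L b S g (i%:R - delta) (j%:R - delta) * x j 0 * (x i 0)^*.
Proof.
move=> hS.
pose A (k : nat) := \sum_(j < n) ghat L g (k%:R - (j%:R - delta) * b%:R) * x j 0.
have -> : \sum_(i < n) \sum_(j < n) CZ L b S g (i%:R - delta) (j%:R - delta) * x j 0 * (x i 0)^*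
   = \sum_(k < L | (2 * k < L)%N) (S k)%:C * (A k * (A k)^*).
  rewrite /CZ.
  transitivity (\sum_(i < n) \sum_(j < n) \sum_(k < L | (2 * k < L)%N)
     (S k)%:C * ((ghat L g (k%:R - (j%:R - delta) * b%:R) * x j 0) *
        ((ghat L g (k%:R - (i%:R - delta) * b%:R))^* * (x i 0)^*))).
    apply: eq_bigr => i _; apply: eq_bigr => j _.
    rewrite !mulr_suml; apply: eq_bigr => k _; ring.
  rewrite exchange_big /=.
  transitivity (\sum_(j < n) \sum_(k < L | (2 * k < L)%N) \sum_(i < n)
     (S k)%:C * ((ghat L g (k%:R - (j%:R - delta) * b%:R) * x j 0) *
        ((ghat L g (k%:R - (i%:R - delta) * b%:R))^* * (x i 0)^*))).
    by apply: eq_bigr => j _; rewrite exchange_big.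
  rewrite exchange_big /=; apply: eq_bigr => k _.
  rewrite /A mulr_suml mulr_sumr; apply: eq_bigr => j _.
  rewrite rmorph_sum /= mulr_sumr mulr_sumr; apply: eq_bigr => i _.
  by rewrite rmorphM /= !numconjE.
apply: sumr_ge0 => k _; apply: mulr_ge0; first by rewrite ler0c.
exact: mulcJ_ge0.
Qed.


Definition Yf L b n (x : 'cV[C]_n) (t : nat) : C :=
  \sum_(j < n) x j 0 * expi (2 * pi * (j%:R * b%:R) * t%:R / L%:R).
Arguments Yf L b {n} x t.

Lemma Npart L b s0 (g : nat -> C) n (x : 'cV[C]_n) : (0 < L)%N ->
  \sum_(i < n) \sum_(j < n) CN L b s0 g i j * x j 0 * (x i 0)^* =
  (s0 ^+ 2)%:C * (L%:R * \sum_(t < L) (g t)^* * g t * (Yf L b x t * (Yf L b x t)^*)).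
Proof.
move=> L0; have L0R : (L%:R : R) != 0 by rewrite pnatr_eq0 -lt0n.
pose e (j : nat) (t : nat) : C := expi (2 * pi * (j%:R * b%:R) * t%:R / L%:R).
transitivity (\sum_(i < n) \sum_(j < n) \sum_(t < L) (s0 ^+ 2)%:C * (L%:R *
   ((g t)^* * g t * ((x j 0 * e j t) * ((x i 0)^* * (e i t)^*))))).
  apply: eq_bigr => i _; apply: eq_bigr => j _.
  rewrite CN_eq // !mulr_sumr !mulr_suml; apply: eq_bigr => t _.
  have -> : expi (2 * pi * ((j%:R - i%:R) * b%:R) * t%:R / L%:R) = e j t * (e i t)^*.
    by rewrite /e /= ?numconjE expiJ -expiD; congr expi; field.
  ring.
rewrite mulr_sumr mulr_sumr.
transitivity (\sum_(i < n) \sum_(t < L) \sum_(j < n) (s0 ^+ 2)%:C * (L%:R *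
   ((g t)^* * g t * ((x j 0 * e j t) * ((x i 0)^* * (e i t)^*))))).
  by apply: eq_bigr => i _; rewrite exchange_big.
rewrite exchange_big /=; apply: eq_bigr => t _.
rewrite exchange_big /=.
rewrite /Yf rmorph_sum /= mulr_suml mulr_sumr mulr_sumr mulr_sumr; apply: eq_bigr => j _.
rewrite mulr_sumr mulr_sumr mulr_sumr mulr_sumr; apply: eq_bigr => i _.
by rewrite /e /=; congr (_ * (_ * (_ * (_ * _)))); rewrite rmorphM.
Qed.


Lemma expi_swap2 (A B : R) (u v : C) :
  u * expi A * (v * expi B) = u * v * expi (A + B).
Proof. by rewrite expiD; ring. Qed.

Lemma Yper L b M n (x : 'cV[C]_n) r k : L = (b * M)%N -> (0 < b)%N -> (0 < M)%N ->
  Yf L b x (r + k * M)%N = Yf L b x r.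
Proof.
move=> hL b0 M0; have b0R : (b%:R : R) != 0 by rewrite pnatr_eq0 -lt0n.
have M0R : (M%:R : R) != 0 by rewrite pnatr_eq0 -lt0n.
apply: eq_bigr => j _; congr (_ * _).
have -> : 2 * pi * (j%:R * b%:R) * (r + k * M)%N%:R / L%:R =
   2 * pi * (j%:R * b%:R) * r%:R / L%:R + 2 * pi * (j * k)%N%:R :> R.
  by rewrite hL !natrD !natrM; field; rewrite M0R b0R.
by rewrite -[RHS]mulr1 -(expi2pin (j * k)) -expiD.
Qed.

Lemma Ynorm L b M (x : 'cV[C]_M) : L = (b * M)%N -> (0 < b)%N -> (0 < M)%N ->
  \sum_(r < M) Yf L b x r * (Yf L b x r)^* = M%:R * \sum_(j < M) x j 0 * (x j 0)^*.
Proof.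
move=> hL b0 M0; have b0R : (b%:R : R) != 0 by rewrite pnatr_eq0 -lt0n.
have M0R : (M%:R : R) != 0 by rewrite pnatr_eq0 -lt0n.
transitivity (\sum_(r < M) \sum_(j < M) \sum_(i < M) (x j 0 * (x i 0)^*) *
   expi (2 * pi * r%:R * (j%:R - i%:R) / M%:R)).
  apply: eq_bigr => r _; rewrite /Yf rmorph_sum mulr_suml; apply: eq_bigr => j _.
  rewrite mulr_sumr; apply: eq_bigr => i _.
  rewrite rmorphM /= ?numconjE expiJ expi_swap2; congr (_ * expi _).
  by rewrite hL natrM; field; rewrite M0R b0R.
rewrite exchange_big /=.
transitivity (\sum_(j < M) \sum_(i < M) (x j 0 * (x i 0)^*) * ((j == i)%:R * M%:R)).
  apply: eq_bigr => j _; rewrite exchange_big /=; apply: eq_bigr => i _.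
  by rewrite -mulr_sumr orth.
rewrite mulr_sumr; apply: eq_bigr => j _.
rewrite (bigD1 j) //= big1 ?addr0 => [|i /negbTE]; first by rewrite eqxx mul1r mulrC.
by rewrite eq_sym => ->; rewrite mul0r mulr0.
Qed.


Lemma normc2E (z : C) : ((ComplexField.Normc.normc z) ^+ 2)%:C = z^* * z.
Proof.
rewrite rmorphXn /=.
have -> : (ComplexField.Normc.normc z)%:C = `|z| by case: z.
by rewrite sqr_normc mulrC.
Qed.

Lemma main_ineq (L b : nat) (g : nat -> C) (S : nat -> R) (sigma0 delta : R) :
  (0 < L)%N -> (b %| L)%N -> (0 < b)%N ->
  (forall k : nat, 0 <= S k) ->
  0 <= sigma0 ^+ 2 -> 0 <= Kg L b g ->
  (forall x : 'cV[C]_(L %/ b),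
     (sigma0 ^+ 2 * Kg L b g)%:C * (\sum_(i < L %/ b) `|x i 0| ^+ 2)
       <= \sum_(i < L %/ b) (CG L b S sigma0 delta g *m x) i 0 * (x i 0)^*).
Proof.
move=> L0 bL b0 hS s0 K0 x.
set M := (L %/ b)%N.
have hL : L = (b * M)%N by rewrite /M mulnC divnK.
have M0 : (0 < M)%N by move: L0; rewrite hL muln_gt0 => /andP[].
have -> : \sum_(i < M) (CG L b S sigma0 delta g *m x) i 0 * (x i 0)^* =
   \sum_(i < M) \sum_(j < M) CZ L b S g (i%:R - delta) (j%:R - delta) * x j 0 * (x i 0)^*
 + \sum_(i < M) \sum_(j < M) CN L b sigma0 g i j * x j 0 * (x i 0)^*.
  rewrite -big_split; apply: eq_bigr => i _ /=.
  rewrite mxE mulr_suml -big_split; apply: eq_bigr => j _ /=.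
  by rewrite mxE !mulrDl.
apply: ler_wpDl; first exact: Zpart.
rewrite Npart //.
pose F (r : nat) := \sum_(k < b) ComplexField.Normc.normc (g (r + k * M)%N) ^+ 2.
pose mn := \big[Num.min/F 0%N]_(t < M) F t.
have Kmn : Kg L b g = b%:R^-1 * mn by [].
have Fmn : forall r : 'I_M, mn <= F r by move=> r; exact: bigmin_le.
set Y := Yf L b x.
pose G (t : nat) : C := (g t)^* * g t * (Y t * (Y t)^*).
have -> : \sum_(t < L) (g t)^* * g t * (Y t * (Y t)^*) =
    \sum_(r < M) (F r)%:C * (Y r * (Y r)^*).
  have := sum_split G b M; rewrite -hL /G => ->.
  apply: eq_bigr => r _.
  rewrite /F rmorph_sum mulr_suml; apply: eq_bigr => k _.
  by rewrite /Y (Yper L b M M x r k hL b0 M0); congr (_ * _); symmetry; exact: normc2E.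
have step : \sum_(r < M) mn%:C * (Y r * (Y r)^*) <= \sum_(r < M) (F r)%:C * (Y r * (Y r)^*).
  apply: ler_sum => r _; apply: ler_wpM2r; first exact: mulcJ_ge0.
  by rewrite lecR.
rewrite -mulr_sumr /Y Ynorm // in step.
have N2 : 0 <= \sum_(i < M) x i 0 * (x i 0)^* by apply: sumr_ge0 => i _; exact: mulcJ_ge0.
have E : \sum_(i < M) `|x i 0| ^+ 2 = \sum_(i < M) x i 0 * (x i 0)^*.
  by apply: eq_bigr => i _; rewrite sqr_normc.
rewrite E.
have mnE : mn = b%:R * Kg L b g by rewrite Kmn mulrA divff ?mul1r // pnatr_eq0 -lt0n.
apply: (le_trans _ (ler_wpM2l _ (ler_wpM2l _ step))); last 2 first.
- by rewrite ler0c.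
- by rewrite ler0n.
rewrite mnE.
move: (\sum_(i < M) _) N2 => N N2.
move: (Kg L b g) K0 => K K0.
move: (sigma0 ^+ 2) s0 => s s0.
rewrite !rmorphM /= rmorph_nat.
have -> : (L%:R : C) = b%:R * M%:R by rewrite hL natrM.
have -> : s%:C * (b%:R * M%:R * (b%:R * K%:C * (M%:R * N))) = (s%:C * K%:C * N) * (b%:R * M%:R) ^+ 2 by ring.
apply: ler_peMr.
  by apply: mulr_ge0 => //; apply: mulr_ge0; rewrite ler0c.
rewrite -natrM -natrX ler1n expn_gt0 muln_gt0 b0 M0.
by [].
Qed.


End Aux.

Lemma inj_unit (F : fieldType) n (A : 'M[F]_n) :
  (forall x : 'cV_n, A *m x = 0 -> x = 0) -> A \in unitmx.
Proof.
move=> H; rewrite -unitmx_tr -row_free_unit -kermx_eq0; apply/eqP/row_matrixP => i.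
rewrite row0.
have : row i (kermx A^T) *m A^T = 0 by apply/sub_kermxP; exact: row_sub.
move=> /(congr1 trmx); rewrite trmx_mul trmxK trmx0 => /H /(congr1 trmx).
by rewrite trmxK trmx0.
Qed.

Theorem proposition2 (R : realType) (L a b : nat) (g : nat -> R[i])
  (S : nat -> R) (sigma0 delta : R) :
  (0 < L)%N -> (a %| L)%N -> (b %| L)%N ->
  0 < Kg L b g ->
  (forall k : nat, 0 <= S k) ->
  0 < sigma0 ^+ 2 ->
  (forall x : 'cV[R[i]]_(L %/ b),
     (sigma0 ^+ 2 * Kg L b g)%:C * (\sum_(i < L %/ b) `|x i 0| ^+ 2)
       <= \sum_(i < L %/ b) (CG L b S sigma0 delta g *m x) i 0 * (x i 0)^*)
  /\ CG L b S sigma0 delta g \in unitmx.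
Proof.
move=> L0 aL bL K0 hS s0.
have b0 : (0 < b)%N.
  rewrite lt0n; apply/negP => /eqP b0; move: K0; rewrite /Kg b0 /=.
  by rewrite invr0 mul0r ltxx.
have H := @main_ineq R L b g S sigma0 delta L0 bL b0 hS (ltW s0) (ltW K0).
split => //.
apply: inj_unit => x Cx.
have := H x; rewrite Cx.
rewrite [X in _ <= X]big1 => [hle|i _]; last first.
  have -> : (0 : 'cV[R[i]]_(L %/ b)) i 0 = 0 by rewrite !mxE.
  by rewrite mul0r.
have hsum : \sum_(i < L %/ b) `|x i 0| ^+ 2 = 0.
  apply: le_anti; rewrite sumr_ge0 ?andbT => [|i _]; last exact: exprn_ge0.
  have hp : 0 < (sigma0 ^+ 2 * Kg L b g)%:C by rewrite ltcR mulr_gt0.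
  by rewrite -(pmulr_rle0 _ hp).
apply/matrixP => i j; rewrite (ord1 j) mxE.
have := @psumr_eq0P _ _ xpredT (fun k => `|x k 0| ^+ 2) (fun k _ => exprn_ge0 2 (normr_ge0 (x k 0))) hsum i isT.
by move/eqP; rewrite expf_eq0 /= normr_eq0 => /eqP.
Qed.
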